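(* Let $p,\Delta>0$ be fixed integers and suppose that sequences $\{\xi_{s,t}\}_{s,t\ge0}\subseteq\mathbb{N}$ and $\{k_i\}_{i\ge0}\subseteq\mathbb{N}$ satisfy $$k_{s+t}=k_s+k_t+p-\Delta\xi_{s,t}\quad\text{for all } s,t\ge0.$$ Then $\Delta\xi_{s,0}=\Delta\xi_{0,s}=k_0+p$ for all $s\ge0$, and $$k_n=nk_1+(n-1)p-\Delta\sum_{s=1}^{n-1}\xi_{1,s}\quad(n>0),\qquad \xi_{u,v}=-\sum_{s=1}^{\min\{u,v\}-1}\xi_{1,s}+\sum_{s=\max\{u,v\}}^{u+v-1}\xi_{1,s}\quad(u,v>0).$$
   Context: $\mathbb{N}$ includes $0$. A sum $\sum_{i=a}^b$ with $b<a$ is zero. *)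

(* Defs.v *)
From mathcomp Require Import all_boot all_order all_algebra.

(* Main.v *)
Require Import Defs.
From mathcomp Require Import all_boot all_order all_algebra.
From mathcomp Require Import zify ring lra.
Import GRing.Theory Num.Theory.
Local Open Scope ring_scope.

Theorem lemma2p6 (p Delta : nat) (hp : (0 < p)%N) (hD : (0 < Delta)%N)
  (xi : nat -> nat -> nat) (k : nat -> nat)
  (hrec : forall s t : nat,
      (k (s + t)%N)%:Z = (k s)%:Z + (k t)%:Z + p%:Z - Delta%:Z * (xi s t)%:Z) :
  (forall s : nat,
      Delta%:Z * (xi s 0%N)%:Z = (k 0%N)%:Z + p%:Z /\
      Delta%:Z * (xi 0%N s)%:Z = (k 0%N)%:Z + p%:Z) /\
  (forall n : nat, (0 < n)%N ->
      (k n)%:Z = n%:Z * (k 1%N)%:Z + (n%:Z - 1) * p%:Z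
                 - Delta%:Z * \sum_(1 <= s < n) (xi 1%N s)%:Z) /\
  (forall u v : nat, (0 < u)%N -> (0 < v)%N ->
      (xi u v)%:Z = - (\sum_(1 <= s < minn u v) (xi 1%N s)%:Z)
                    + \sum_(maxn u v <= s < (u + v)%N) (xi 1%N s)%:Z).
Proof.
set S := fun n => \sum_(1 <= s < n) (xi 1%N s)%:Z.
have P1 : forall s : nat,
      Delta%:Z * (xi s 0%N)%:Z = (k 0%N)%:Z + p%:Z /\
      Delta%:Z * (xi 0%N s)%:Z = (k 0%N)%:Z + p%:Z.
  move=> s; split.
    have := hrec s 0%N; rewrite addn0 => h; lra.
  have := hrec 0%N s; rewrite add0n => h; lra.
have P2 : forall n : nat, (0 < n)%N ->
      (k n)%:Z = n%:Z * (k 1%N)%:Z + (n%:Z - 1) * p%:Z - Delta%:Z * S n.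
  case=> // n _; elim: n => [|n IH].
    rewrite /S big_geq //; lra.
  rewrite /S big_nat_recr //= -/(S n.+1).
  have := hrec 1%N n.+1; rewrite add1n => ->.
  rewrite IH -[n.+2]addn1 -[n.+1]addn1 !PoszD; lra.
split => //; split => //.
move=> u v hu hv.
have Huv : Delta%:Z * (xi u v)%:Z = Delta%:Z * (S (u + v)%N - S u - S v).
  have := hrec u v; rewrite (P2 (u+v)%N) ?addn_gt0 ?hu // (P2 u hu) (P2 v hv) PoszD => h; rewrite !mulrBr; nra.
have {Huv} Huv : (xi u v)%:Z = S (u + v)%N - S u - S v.
  have hD0 : Delta%:Z != 0 by lia.
  exact: (mulfI hD0 Huv).
rewrite Huv.
have split_ : forall a b, (1 <= a)%N -> (a <= b)%N ->
   S b = S a + \sum_(a <= s < b) (xi 1%N s)%:Z.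
  move=> a b h1 h2; by rewrite /S (@big_cat_nat _ _ _ a 1 b _ _ h1 h2).
case: (leqP u v) => h.
  rewrite (split_ v (u+v)%N) //; [rewrite /S; lra|lia].
rewrite (split_ u (u+v)%N) //; [rewrite /S; lra|lia].
Qed.
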